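(* Let $(A,\alpha_A)$ be a Hom-algebra and $(H,\alpha_H)$ a Hom-coalgebra (finite-dimensional, with bijective structure maps). Let $\varphi:{A^*}^{cop}\otimes H\to H\otimes{A^*}^{cop}$, $\varphi(f\otimes h)=\sum h^\varphi\otimes f^\varphi$, and $\Phi:H\otimes A\to A\otimes H$, $\Phi(h\otimes a)=\sum a_\Phi\otimes h^\Phi$, be linear maps corresponding to each other via $\sum f(a_\Phi)h^\Phi=\sum f^\varphi(a)h^\varphi$ for all $f\in A^*$, $a\in A$, $h\in H$ (this is a bijection between such linear maps). Then $\varphi$ is a Hom-cotwistor if and only if $(\alpha_A\otimes\alpha_H)\circ\Phi=\Phi\circ(\alpha_H\otimes\alpha_A)$ and, for all $a,b\in A$, $h\in H$: (E1) $(m_A\otimes\alpha_H)\big((\mathrm{id}_A\otimes\Phi)(\Phi\otimes\mathrm{id}_A)(h\otimes a\otimes b)\big)=\Phi(\alpha_H(h)\otimes ab)$, i.e. $\sum a_\Phi b_\Psi\otimes\alpha_H((h^\Phi)^\Psi)=\sum(ab)_\Phi\otimes\alpha_H(h)^\Phi$; (E2) $(\Phi\otimes\mathrm{id}_H)(\mathrm{id}_H\otimes\Phi)(\Delta_H(h)\otimes\alpha_A(a))=(\alpha_A\otimes\Delta_H)(\Phi(h\otimes a))$; (E3) $(\mathrm{id}_A\otimes\varepsilon_H)(\Phi(h\otimes a))=\varepsilon_H(h)a$; (E4) $\Phi(h\otimes1_A)=1_A\otimes h$.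
   Context: $\Bbbk$ field of characteristic $0$; vector spaces finite-dimensional. Hom-algebra $(A,\mu,1_A,\alpha_A)$: $\alpha_A(a)(bc)=(ab)\alpha_A(c)$, $\alpha_A(1_A)=1_A$, $1_Aa=a1_A=\alpha_A(a)$; $m_A$ denotes multiplication. Hom-coalgebra $(C,\alpha,\Delta,\varepsilon)$: $\varepsilon\alpha=\varepsilon$, $\alpha(c_1)\otimes\Delta(c_2)=\Delta(c_1)\otimes\alpha(c_2)$, $\varepsilon(c_1)c_2=c_1\varepsilon(c_2)=\alpha(c)$. ${A^*}^{cop}$ is the Hom-coalgebra on $A^*$ with $\overline\varepsilon(f)=f(1_A)$, $\overline\Delta(f)\in A^*\otimes A^*\cong(A\otimes A)^*$ given by $\overline\Delta(f)(x\otimes y)=f(\alpha_A^{-2}(yx))$, and $\alpha_{{A^*}^{cop}}(f)=f\circ\alpha_A^{-1}$. For Hom-coalgebras $B,H$, a Hom-cotwistor is a linear $\varphi:B\otimes H\to H\otimes B$ with $\varphi\circ(\alpha_B\otimes\alpha_H)=(\alpha_H\otimes\alpha_B)\circ\varphi$ and (M1) $((\varphi\otimes\mathrm{id}_B)(\mathrm{id}_B\otimes\varphi))(\Delta_B(b)\otimes\alpha_H(h))=(\alpha_H\otimes\Delta_B)\varphi(b\otimes h)$; (M2) $((\mathrm{id}_H\otimes\varphi)(\varphi\otimes\mathrm{id}_H))(\alpha_B(b)\otimes\Delta_H(h))=(\Delta_H\otimes\alpha_B)\varphi(b\otimes h)$; (M3) $(\varepsilon_H\otimes\mathrm{id})\varphi(b\otimes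 h)=\varepsilon_H(h)b$; (M4) $(\mathrm{id}\otimes\varepsilon_B)\varphi(b\otimes h)=\varepsilon_B(b)h$ (here $B={A^*}^{cop}$). *)

(* Defs.v *)
(* Finite-dimensional K-vector spaces are modelled in
   coordinates: a space of dimension n is 'rV[K]_n.  The tensor product of
   'rV_n and 'rV_m is 'rV_(n*m), with u (x) v := mxvec (u^T *m v), so that
   the coordinate of u (x) v at mxvec_index i j is u_i * v_j.  Linear maps
   are given either as matrices (acting on the right) or as functions;
   f (x) g is always the linear extension from basis tensors. *)
From HB Require Import structures.
From mathcomp Require Import all_boot all_order all_algebra.
Set Implicit Arguments. Unset Strict Implicit. Unset Printing Implicit Defensive.
Import Order.TTheory GRing.Theory Num.Theory.
Local Open Scope ring_scope.

Section HomTensor.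
Variable K : fieldType.
Local Notation V n := 'rV[K]_n.

Definition bvec n (i : 'I_n) : V n := delta_mx 0 i.

Definition tens n m (u : V n) (v : V m) : V (n * m) := mxvec (u^T *m v).

Definition coef2 n m (x : V (n * m)) (i : 'I_n) (j : 'I_m) : K :=
  x 0 (mxvec_index i j).

Definition mxf n p (M : 'M[K]_(n, p)) : V n -> V p := fun x => x *m M.
Definition cvfun n (e : 'cV[K]_n) : V n -> K := fun x => (x *m e) 0 0.

Definition tmap n m p q (f : V n -> V p) (g : V m -> V q) (x : V (n * m))
  : V (p * q) :=
  \sum_(i < n) \sum_(j < m) coef2 x i j *: tens (f (bvec i)) (g (bvec j)).

Definition assocL n m p (x : V (n * (m * p))) : V (n * m * p) :=
  \sum_(i < n) \sum_(j < m) \sum_(k < p)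
     x 0 (mxvec_index i (mxvec_index j k)) *: tens (tens (bvec i) (bvec j)) (bvec k).
Definition assocR n m p (x : V (n * m * p)) : V (n * (m * p)) :=
  \sum_(i < n) \sum_(j < m) \sum_(k < p)
     x 0 (mxvec_index (mxvec_index i j) k) *: tens (bvec i) (tens (bvec j) (bvec k)).

Definition lcontract n m (e : V n -> K) (x : V (n * m)) : V m :=
  \sum_(i < n) \sum_(j < m) (coef2 x i j * e (bvec i)) *: bvec j.
Definition rcontract n m (e : V m -> K) (x : V (n * m)) : V n :=
  \sum_(i < n) \sum_(j < m) (coef2 x i j * e (bvec j)) *: bvec i.

Definition hmul n (mu : 'M[K]_(n * n, n)) (a b : V n) : V n := tens a b *m mu.

Definition is_hom_algebra n (mu : 'M[K]_(n * n, n)) (one : V n) (alpha : 'M[K]_n) :=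
  [/\ forall a b c : V n,
        hmul mu (a *m alpha) (hmul mu b c) = hmul mu (hmul mu a b) (c *m alpha),
      one *m alpha = one &
      forall a : V n, hmul mu one a = a *m alpha /\ hmul mu a one = a *m alpha].

Definition is_hom_coalgebra m (alpha : V m -> V m) (Delta : V m -> V (m * m))
    (eps : V m -> K) :=
  [/\ forall c, eps (alpha c) = eps c,
      forall c, assocL (tmap alpha Delta (Delta c)) = tmap Delta alpha (Delta c),
      forall c, lcontract eps (Delta c) = alpha c &
      forall c, rcontract eps (Delta c) = alpha c].

(* Dual space of A = V n via the dual basis: f(a) = sum_i f_i a_i.
   A-star (x) A-star = V (n*n) is identified with the dual of A (x) A accordingly. *)
Definition evd n (f a : V n) : K := \sum_(i < n) f 0 i * a 0 i.

Definition dual_alpha n (alpha : 'M[K]_n) (f : V n) : V n :=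
  \row_i evd f (bvec i *m invmx alpha).
Definition dual_Delta n (mu : 'M[K]_(n * n, n)) (alpha : 'M[K]_n) (f : V n)
  : V (n * n) :=                   (* Delta(f)(x (x) y) = f(alpha^-2(y x)) *)
  mxvec (\matrix_(i, j) evd f (hmul mu (bvec j) (bvec i) *m invmx alpha *m invmx alpha)).
Definition dual_eps n (one : V n) (f : V n) : K := evd f one.

Definition is_hom_cotwistor nb m (alphaB : V nb -> V nb) (DeltaB : V nb -> V (nb * nb))
    (epsB : V nb -> K) (alphaH : V m -> V m) (DeltaH : V m -> V (m * m))
    (epsH : V m -> K) (phi : V (nb * m) -> V (m * nb)) :=
  [/\ forall x, phi (tmap alphaB alphaH x) = tmap alphaH alphaB (phi x),
      forall b h, tmap phi (@id (V nb))
                    (assocL (tmap (@id (V nb)) phi (assocR (tens (DeltaB b) (alphaH h)))))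
                  = assocL (tmap alphaH DeltaB (phi (tens b h))),
      forall b h, assocL (tmap (@id (V m)) phi
                    (assocR (tmap phi (@id (V m)) (assocL (tens (alphaB b) (DeltaH h))))))
                  = tmap DeltaH alphaB (phi (tens b h)),
      forall b h, lcontract epsH (phi (tens b h)) = epsH h *: b &
      forall b h, rcontract epsB (phi (tens b h)) = epsB b *: h].

End HomTensor.

(* Main.v *)
Require Import Defs.
From HB Require Import structures.
From mathcomp Require Import all_boot all_order all_algebra ring.
Set Implicit Arguments. Unset Strict Implicit. Unset Printing Implicit Defensive.
Import GRing.Theory.
Local Open Scope ring_scope.


Section Tools.
Variable K : fieldType.
Local Notation V n := 'rV[K]_n.
Local Notation bvec := (bvec K).

Lemma bvecE n (i j : 'I_n) : bvec i 0 j = (i == j)%:R.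
Proof. by rewrite /Defs.bvec mxE eqxx eq_sym. Qed.

Lemma bvec_mul n p (i : 'I_n) (M : 'M[K]_(n,p)) j : (bvec i *m M) 0 j = M i j.
Proof. by rewrite /Defs.bvec -rowE mxE. Qed.

Lemma entryE n p (M : 'M[K]_(n,p)) i j : M i j = (bvec i *m M) 0 j.
Proof. by rewrite bvec_mul. Qed.

Lemma sum_delta_l n (F : 'I_n -> K) i : \sum_j (i == j)%:R * F j = F i.
Proof.
rewrite (bigD1 i) //= eqxx mul1r big1 ?addr0 // => j /negbTE ji.
by rewrite eq_sym ji mul0r.
Qed.

Lemma sum_delta_r n (F : 'I_n -> K) i : \sum_j F j * (j == i)%:R = F i.
Proof.
rewrite (bigD1 i) //= eqxx mulr1 big1 ?addr0 // => j /negbTE ji.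
by rewrite ji mulr0.
Qed.

Lemma sum_delta_l' n (F : 'I_n -> K) i : \sum_j (j == i)%:R * F j = F i.
Proof. by rewrite -[RHS](sum_delta_l F); apply: eq_bigr => j _; rewrite eq_sym. Qed.
Lemma sum_delta_r' n (F : 'I_n -> K) i : \sum_j F j * (i == j)%:R = F i.
Proof. by rewrite -[RHS](sum_delta_r F); apply: eq_bigr => j _; rewrite eq_sym. Qed.

Lemma sum_id_l n (F : 'I_n -> K) i : \sum_j (1%:M : 'M[K]_n) i j * F j = F i.
Proof. rewrite -[RHS](sum_delta_l F); apply: eq_bigr => j _; by rewrite mxE. Qed.

Lemma sum_id_r n (F : 'I_n -> K) i : \sum_j F j * (1%:M : 'M[K]_n) j i = F i.
Proof. rewrite -[RHS](sum_delta_r F); apply: eq_bigr => j _; by rewrite mxE. Qed.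

Lemma big_pair n m (F : 'I_(n * m) -> K) :
  \sum_I F I = \sum_i \sum_j F (mxvec_index i j).
Proof.
rewrite pair_big /= (reindex (uncurry (@mxvec_index n m))) /=.
  by apply: eq_bigr => -[i j].
exact: curry_mxvec_bij.
Qed.

Lemma coef2_tens n m (u : V n) (v : V m) i j : coef2 (tens u v) i j = u 0 i * v 0 j.
Proof. by rewrite /coef2 /tens mxvecE mxE big_ord1 mxE. Qed.

Lemma tens_bvec n m (i : 'I_n) (j : 'I_m) : tens (bvec i) (bvec j) = bvec (mxvec_index i j).
Proof. by rewrite /tens /bvec trmx_delta mul_delta_mx mxvec_delta. Qed.

Lemma vec_ext2 n m (x y : V (n * m)) :
  (forall i j, coef2 x i j = coef2 y i j) -> x = y.
Proof. by move=> H; apply/rowP => k; case/mxvec_indexP: k => i j; exact: H. Qed.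

Lemma bvec2E n m (i i0 : 'I_n) (j j0 : 'I_m) :
  coef2 (bvec (mxvec_index i j)) i0 j0 = (i == i0)%:R * (j == j0)%:R.
Proof. by rewrite -tens_bvec coef2_tens !bvecE. Qed.

Lemma vec_expand2 n m (x : V (n * m)) :
  x = \sum_i \sum_j coef2 x i j *: bvec (mxvec_index i j).
Proof.
apply: vec_ext2 => i0 j0; rewrite {2}/coef2 summxE.
transitivity (\sum_i (i == i0)%:R * \sum_j coef2 x i j * (j == j0)%:R).
  by rewrite sum_delta_l' sum_delta_r.
apply: eq_bigr => i _; rewrite mulr_sumr summxE; apply: eq_bigr => j _.
rewrite mxE.
have -> : bvec (mxvec_index i j) 0 (mxvec_index i0 j0) = (i == i0)%:R * (j == j0)%:R by exact: bvec2E.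
by rewrite mulrCA mulrA.
Qed.

Lemma tmap_is_linear n m p q (f : V n -> V p) (g : V m -> V q) :
  linear (tmap f g).
Proof.
move=> c x y; rewrite /tmap scaler_sumr -big_split; apply: eq_bigr => i _.
rewrite scaler_sumr -big_split; apply: eq_bigr => j _.
by rewrite /coef2 !mxE scalerDl scalerA.
Qed.
HB.instance Definition _ n m p q f g :=
  GRing.isLinear.Build K (V (n * m)) (V (p * q)) *:%R (@tmap K n m p q f g)
    (@tmap_is_linear n m p q f g).

Lemma assocL_is_linear n m p : linear (@assocL K n m p).
Proof.
move=> c x y; rewrite /assocL scaler_sumr -big_split; apply: eq_bigr => i _.
rewrite scaler_sumr -big_split; apply: eq_bigr => j _.
rewrite scaler_sumr -big_split; apply: eq_bigr => k _.
by rewrite !mxE scalerDl scalerA.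
Qed.
HB.instance Definition _ n m p :=
  GRing.isLinear.Build K (V (n * (m * p))) (V (n * m * p)) *:%R (@assocL K n m p)
    (@assocL_is_linear n m p).

Lemma assocR_is_linear n m p : linear (@assocR K n m p).
Proof.
move=> c x y; rewrite /assocR scaler_sumr -big_split; apply: eq_bigr => i _.
rewrite scaler_sumr -big_split; apply: eq_bigr => j _.
rewrite scaler_sumr -big_split; apply: eq_bigr => k _.
by rewrite !mxE scalerDl scalerA.
Qed.
HB.instance Definition _ n m p :=
  GRing.isLinear.Build K (V (n * m * p)) (V (n * (m * p))) *:%R (@assocR K n m p)
    (@assocR_is_linear n m p).

Lemma lcontract_is_linear n m (e : V n -> K) : linear (@lcontract K n m e).
Proof.
move=> c x y; rewrite /lcontract scaler_sumr -big_split; apply: eq_bigr => i _.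
rewrite scaler_sumr -big_split; apply: eq_bigr => j _.
by rewrite /coef2 !mxE mulrDl scalerDl scalerA mulrA.
Qed.
HB.instance Definition _ n m e :=
  GRing.isLinear.Build K (V (n * m)) (V m) *:%R (@lcontract K n m e)
    (@lcontract_is_linear n m e).

Lemma rcontract_is_linear n m (e : V m -> K) : linear (@rcontract K n m e).
Proof.
move=> c x y; rewrite /rcontract scaler_sumr -big_split; apply: eq_bigr => i _.
rewrite scaler_sumr -big_split; apply: eq_bigr => j _.
by rewrite /coef2 !mxE mulrDl scalerDl scalerA mulrA.
Qed.
HB.instance Definition _ n m e :=
  GRing.isLinear.Build K (V (n * m)) (V n) *:%R (@rcontract K n m e)
    (@rcontract_is_linear n m e).

Definition tensl m n (v : V m) (u : V n) := tens u v.
Lemma tensl_is_linear m n (v : V m) : linear (@tensl m n v).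
Proof. by move=> c x y; rewrite /tensl /tens linearP mulmxDl -scalemxAl linearP. Qed.
HB.instance Definition _ m n v :=
  GRing.isLinear.Build K (V n) (V (n * m)) *:%R (@tensl m n v) (@tensl_is_linear m n v).
Lemma tensr_is_linear m n (u : V n) : linear (@tens K n m u).
Proof. by move=> c x y; rewrite /tens mulmxDr -scalemxAr linearP. Qed.
HB.instance Definition _ m n u :=
  GRing.isLinear.Build K (V m) (V (n * m)) *:%R (@tens K n m u) (@tensr_is_linear m n u).

End Tools.


Section Mx.
Variable K : fieldType.
Local Notation V n := 'rV[K]_n.
Local Notation bvec := (bvec K).

Definition Km n m p q (A : 'M[K]_(n, p)) (B : 'M[K]_(m, q)) : 'M[K]_(n * m, p * q) :=
  lin1_mx (tmap (mxf A) (mxf B)).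
Definition Lm n m p : 'M[K]_(n * (m * p), n * m * p) := lin1_mx (@assocL K n m p).
Definition Rm n m p : 'M[K]_(n * m * p, n * (m * p)) := lin1_mx (@assocR K n m p).
Definition LCm n m (e : V n -> K) : 'M[K]_(n * m, m) := lin1_mx (@lcontract K n m e).
Definition RCm n m (e : V m -> K) : 'M[K]_(n * m, n) := lin1_mx (@rcontract K n m e).

Lemma tmapK n m p q (A : 'M[K]_(n, p)) (B : 'M[K]_(m, q)) x :
  tmap (mxf A) (mxf B) x = x *m Km A B.
Proof. by rewrite /Km mul_rV_lin1. Qed.
Lemma assocLK n m p (x : V (n * (m * p))) : assocL x = x *m Lm n m p.
Proof. by rewrite /Lm mul_rV_lin1. Qed.
Lemma assocRK n m p (x : V (n * m * p)) : assocR x = x *m Rm n m p.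
Proof. by rewrite /Rm mul_rV_lin1. Qed.
Lemma lcontractK n m (e : V n -> K) (x : V (n * m)) : lcontract e x = x *m LCm m e.
Proof. by rewrite /LCm mul_rV_lin1. Qed.
Lemma rcontractK n m (e : V m -> K) (x : V (n * m)) : rcontract e x = x *m RCm n e.
Proof. by rewrite /RCm mul_rV_lin1. Qed.

Lemma tmap_ext n m p q (f f' : V n -> V p) (g g' : V m -> V q) x :
  (forall i, f (bvec i) = f' (bvec i)) -> (forall j, g (bvec j) = g' (bvec j)) ->
  tmap f g x = tmap f' g' x.
Proof.
move=> Hf Hg; rewrite /tmap; apply: eq_bigr => i _; apply: eq_bigr => j _.
by rewrite Hf Hg.
Qed.

Lemma mxf1 n (i : 'I_n) : mxf 1%:M (bvec i) = bvec i.
Proof. by rewrite /mxf mulmx1. Qed.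

Lemma tmap_id_l n m q (g : V m -> V q) x : tmap (@id (V n)) g x = tmap (mxf 1%:M) g x.
Proof. by apply: tmap_ext => // i; rewrite mxf1. Qed.
Lemma tmap_id_r n m p (f : V n -> V p) x : tmap f (@id (V m)) x = tmap f (mxf 1%:M) x.
Proof. by apply: tmap_ext => // i; rewrite mxf1. Qed.

Lemma coef2_tmap n m p q (f : V n -> V p) (g : V m -> V q) x i j :
  coef2 (tmap f g x) i j
  = \sum_a \sum_b coef2 x a b * ((f (bvec a)) 0 i * (g (bvec b)) 0 j).
Proof.
rewrite /tmap {1}/coef2 summxE; apply: eq_bigr => a _.
rewrite summxE; apply: eq_bigr => b _.
by rewrite mxE -/(coef2 _ i j) coef2_tens.
Qed.

Lemma tmap_tens n m p q (A : 'M[K]_(n, p)) (B : 'M[K]_(m, q)) u v :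
  tmap (mxf A) (mxf B) (tens u v) = tens (u *m A) (v *m B).
Proof.
apply: vec_ext2 => i j; rewrite coef2_tmap coef2_tens !mxE big_distrl /=.
apply: eq_bigr => a _; rewrite big_distrr /=; apply: eq_bigr => b _.
rewrite coef2_tens /mxf !bvec_mul.
by rewrite mulrACA.
Qed.

Lemma tens_mul n m p q (A : 'M[K]_(n, p)) (B : 'M[K]_(m, q)) u v :
  tens (u *m A) (v *m B) = tens u v *m Km A B.
Proof. by rewrite -tmapK tmap_tens. Qed.

Lemma mx_ext_all n p (X Y : 'M[K]_(n, p)) : (forall x : V n, x *m X = x *m Y) -> X = Y.
Proof. by move=> H; apply/row_matrixP => i; rewrite !rowE H. Qed.

Lemma mx_ext2 n m p (X Y : 'M[K]_(n * m, p)) :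
  (forall i j, tens (bvec i) (bvec j) *m X = tens (bvec i) (bvec j) *m Y) -> X = Y.
Proof.
move=> H; apply/row_matrixP => k; rewrite !rowE; case/mxvec_indexP: k => i j.
by have := H i j; rewrite tens_bvec.
Qed.

Lemma mx_ext3 n m q p (X Y : 'M[K]_(n * m * q, p)) :
  (forall i j k, tens (tens (bvec i) (bvec j)) (bvec k) *m X
               = tens (tens (bvec i) (bvec j)) (bvec k) *m Y) -> X = Y.
Proof.
move=> H; apply: mx_ext2 => I k; case/mxvec_indexP: I => i j.
by rewrite -tens_bvec H.
Qed.

Lemma mx_ext3' n m q p (X Y : 'M[K]_(n * (m * q), p)) :
  (forall i j k, tens (bvec i) (tens (bvec j) (bvec k)) *m X
               = tens (bvec i) (tens (bvec j) (bvec k)) *m Y) -> X = Y.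
Proof.
move=> H; apply: mx_ext2 => i J; case/mxvec_indexP: J => j k.
by rewrite -tens_bvec H.
Qed.

Lemma Km_mul n m p q r s (A : 'M[K]_(n, p)) (B : 'M[K]_(m, q))
   (C : 'M[K]_(p, r)) (D : 'M[K]_(q, s)) :
  Km A B *m Km C D = Km (A *m C) (B *m D).
Proof.
apply: mx_ext2 => i j.
by rewrite mulmxA -!tens_mul -!mulmxA.
Qed.

Lemma Km1 n m : Km (1%:M : 'M[K]_n) (1%:M : 'M[K]_m) = 1%:M.
Proof. by apply: mx_ext2 => i j; rewrite -tens_mul !mulmx1. Qed.

Lemma KmE n m p q (A : 'M[K]_(n, p)) (B : 'M[K]_(m, q)) i j k l :
  Km A B (mxvec_index i j) (mxvec_index k l) = A i k * B j l.
Proof.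
by rewrite entryE -tens_bvec -tens_mul -/(coef2 _ k l) coef2_tens !bvec_mul.
Qed.

Lemma sum2_delta n m (F : 'I_n -> 'I_m -> K) i0 j0 :
  \sum_i \sum_j F i j * ((i == i0)%:R * (j == j0)%:R) = F i0 j0.
Proof.
transitivity (\sum_i (i == i0)%:R * \sum_j F i j * (j == j0)%:R).
  apply: eq_bigr => i _; rewrite mulr_sumr; apply: eq_bigr => j _.
  by rewrite mulrCA mulrA.
by rewrite sum_delta_l' sum_delta_r.
Qed.

Lemma coef2_assocL n m p (x : V (n * (m * p))) i j k :
  coef2 (assocL x) (mxvec_index i j) k = coef2 x i (mxvec_index j k).
Proof.
rewrite /assocL {1}/coef2 summxE.
transitivity (\sum_i' \sum_j' (\sum_k' x 0 (mxvec_index i' (mxvec_index j' k')) * (k' == k)%:R)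
   * ((i' == i)%:R * (j' == j)%:R)); last by rewrite sum2_delta sum_delta_r.
apply: eq_bigr => i' _; rewrite summxE; apply: eq_bigr => j' _.
rewrite big_distrl /= summxE; apply: eq_bigr => k' _.
rewrite mxE !tens_bvec -/(coef2 _ (mxvec_index i j) k) bvec2E.
have -> : (mxvec_index i' j' == mxvec_index i j)%:R = (i' == i)%:R * (j' == j)%:R :> K.
  by rewrite -bvec2E /coef2 bvecE.
by rewrite [RHS]mulrAC mulrA.
Qed.

Lemma coef2_assocR n m p (x : V (n * m * p)) i j k :
  coef2 (assocR x) i (mxvec_index j k) = coef2 x (mxvec_index i j) k.
Proof.
rewrite /assocR {1}/coef2 summxE.
transitivity (\sum_i' \sum_j' (\sum_k' x 0 (mxvec_index (mxvec_index i' j') k') * (k' == k)%:R)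
   * ((i' == i)%:R * (j' == j)%:R)); last by rewrite sum2_delta sum_delta_r.
apply: eq_bigr => i' _; rewrite summxE; apply: eq_bigr => j' _.
rewrite big_distrl /= summxE; apply: eq_bigr => k' _.
rewrite mxE !tens_bvec -/(coef2 _ i (mxvec_index j k)) bvec2E.
have -> : (mxvec_index j' k' == mxvec_index j k)%:R = (j' == j)%:R * (k' == k)%:R :> K.
  by rewrite -bvec2E /coef2 bvecE.
by rewrite [RHS]mulrAC !mulrA.
Qed.

Lemma assocL_tens n m p (u : V n) (v : V m) (w : V p) :
  assocL (tens u (tens v w)) = tens (tens u v) w.
Proof.
apply: vec_ext2 => I k; case/mxvec_indexP: I => i j.
rewrite coef2_assocL !coef2_tens -[tens v w 0 _]/(coef2 (tens v w) j k) -[tens u v 0 _]/(coef2 (tens u v) i j) !coef2_tens; exact: mulrA.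
Qed.

Lemma assocR_tens n m p (u : V n) (v : V m) (w : V p) :
  assocR (tens (tens u v) w) = tens u (tens v w).
Proof.
apply: vec_ext2 => i J; case/mxvec_indexP: J => j k.
rewrite coef2_assocR !coef2_tens -[tens v w 0 _]/(coef2 (tens v w) j k) -[tens u v 0 _]/(coef2 (tens u v) i j) !coef2_tens; exact: esym (mulrA _ _ _).
Qed.

Lemma Lm_nat n m p n' m' p' (A : 'M[K]_(n, n')) (B : 'M[K]_(m, m')) (C : 'M[K]_(p, p')) :
  Lm n m p *m Km (Km A B) C = Km A (Km B C) *m Lm n' m' p'.
Proof.
apply: mx_ext3' => i j k.
rewrite mulmxA -assocLK assocL_tens -tens_mul -tens_mul.
by rewrite mulmxA -tens_mul -tens_mul -assocLK assocL_tens.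
Qed.

Lemma Rm_nat n m p n' m' p' (A : 'M[K]_(n, n')) (B : 'M[K]_(m, m')) (C : 'M[K]_(p, p')) :
  Rm n m p *m Km A (Km B C) = Km (Km A B) C *m Rm n' m' p'.
Proof.
apply: mx_ext3 => i j k.
rewrite mulmxA -assocRK assocR_tens -tens_mul -tens_mul.
by rewrite mulmxA -tens_mul -tens_mul -assocRK assocR_tens.
Qed.

End Mx.


Section Conv.
Variable K : fieldType.
Local Notation V n := 'rV[K]_n.
Local Notation bvec := (bvec K).

Lemma evd_bvec_l n (k : 'I_n) (y : V n) : evd (bvec k) y = y 0 k.
Proof.
rewrite /evd (eq_bigr (fun i => (k == i)%:R * y 0 i)) ?sum_delta_l // => i _.
by rewrite bvecE.
Qed.
Lemma evd_bvec_r n (k : 'I_n) (f : V n) : evd f (bvec k) = f 0 k.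
Proof.
rewrite /evd (eq_bigr (fun i => f 0 i * (k == i)%:R)) ?sum_delta_r' // => i _.
by rewrite bvecE.
Qed.

Definition islin n (e : V n -> K) := forall u, e u = \sum_i u 0 i * e (bvec i).

Lemma islin_cvfun n (c : 'cV[K]_n) : islin (cvfun c).
Proof.
move=> u; rewrite /cvfun mxE; apply: eq_bigr => i _.
by rewrite -/(mxf c (bvec i)) /mxf bvec_mul.
Qed.
Lemma islin_evd n (f : V n) : islin (evd f).
Proof. by move=> u; rewrite {1}/evd; apply: eq_bigr => i _; rewrite evd_bvec_r mulrC. Qed.
Lemma islin_evdr n (a : V n) : islin (fun g => evd g a).
Proof. by move=> u; rewrite {1}/evd; apply: eq_bigr => i _; rewrite evd_bvec_l. Qed.

Lemma lcontract_tens n m (e : V n -> K) (u : V n) (v : V m) :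
  islin e -> lcontract e (tens u v) = e u *: v.
Proof.
move=> le; apply/rowP => j0; rewrite le /lcontract summxE mxE big_distrl /=.
apply: eq_bigr => i _; rewrite summxE.
rewrite (eq_bigr (fun j => coef2 (tens u v) i j * e (bvec i) * (j == j0)%:R)); last first.
  by move=> j _; rewrite !mxE eqxx eq_sym.
by rewrite sum_delta_r coef2_tens mulrAC.
Qed.

Lemma rcontract_tens n m (e : V m -> K) (u : V n) (v : V m) :
  islin e -> rcontract e (tens u v) = e v *: u.
Proof.
move=> le; apply/rowP => i0; rewrite le /rcontract summxE mxE big_distrl /=.
rewrite (eq_bigr (fun i => (\sum_j coef2 (tens u v) i j * e (bvec j)) * (i == i0)%:R)); last first.
  move=> i _; rewrite summxE big_distrl /=; apply: eq_bigr => j _.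
  by rewrite !mxE eqxx eq_sym.
rewrite sum_delta_r; apply: eq_bigr => j _.
by rewrite coef2_tens [RHS]mulrC mulrA.
Qed.

Lemma dual_alphaE n (aA : 'M[K]_n) f : dual_alpha aA f = f *m (invmx aA)^T.
Proof.
apply/rowP => i; rewrite !mxE /evd; apply: eq_bigr => k _.
by rewrite bvec_mul mxE.
Qed.

Lemma dual_Delta_is_linear n (mu : 'M[K]_(n * n, n)) aA : linear (dual_Delta mu aA).
Proof.
move=> c x y; apply/rowP => I; case/mxvec_indexP: I => i j.
rewrite !mxE !mxvecE !mxE /evd mulr_sumr -big_split; apply: eq_bigr => k _.
by rewrite !mxE mulrDl mulrA.
Qed.
HB.instance Definition _ n mu aA :=
  GRing.isLinear.Build K (V n) (V (n * n)) *:%R (@dual_Delta K n mu aA)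
    (@dual_Delta_is_linear n mu aA).

Definition DBm n (mu : 'M[K]_(n * n, n)) aA := lin1_mx (dual_Delta mu aA).
Lemma dual_DeltaK n (mu : 'M[K]_(n * n, n)) aA f : dual_Delta mu aA f = f *m DBm mu aA.
Proof. by rewrite /DBm mul_rV_lin1. Qed.
Lemma DBmE n (mu : 'M[K]_(n * n, n)) aA k i j :
  DBm mu aA k (mxvec_index i j) = (mu *m invmx aA *m invmx aA) (mxvec_index j i) k.
Proof.
rewrite /DBm mxE mxvecE mxE -/(bvec k) evd_bvec_l /hmul tens_bvec.
by rewrite -!mulmxA bvec_mul !mulmxA.
Qed.

Definition TLm m n (v : V n) : 'M[K]_(m, m * n) := lin1_mx (@tensl K n m v).
Definition TRm m n (u : V n) : 'M[K]_(m, n * m) := lin1_mx (@tens K n m u).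
Lemma tenslK m n (v : V n) (u : V m) : tens u v = u *m TLm m v.
Proof. by rewrite /TLm mul_rV_lin1. Qed.
Lemma tensrK m n (v : V m) (u : V n) : tens u v = v *m TRm m u.
Proof. by rewrite /TRm mul_rV_lin1. Qed.

End Conv.


Section Cond.
Variable K : fieldType.
Local Notation V n := 'rV[K]_n.
Local Notation bvec := (bvec K).
Variables (n m : nat) (mu : 'M[K]_(n * n, n)) (one : 'rV[K]_n) (aA : 'M[K]_n)
    (aH : 'M[K]_m) (DH : 'M[K]_(m, m * m)) (eH : 'cV[K]_m)
    (phi : 'M[K]_(n * m, m * n)) (Phi : 'M[K]_(m * n, n * m)).

Lemma ext1_iff a p (X Y : 'M[K]_(a, p)) : (forall x : V a, x *m X = x *m Y) <-> X = Y.
Proof. by split=> [|-> //]; exact: mx_ext_all. Qed.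
Lemma ext2_iff a b p (X Y : 'M[K]_(a * b, p)) :
  (forall u v, tens u v *m X = tens u v *m Y) <-> X = Y.
Proof. by split=> [H|-> //]; apply: mx_ext2 => i j; exact: H. Qed.
Lemma ext3_iff a b c p (X Y : 'M[K]_(a * b * c, p)) :
  (forall u v w, tens (tens u v) w *m X = tens (tens u v) w *m Y) <-> X = Y.
Proof. by split=> [H|-> //]; apply: mx_ext3 => i j k; exact: H. Qed.

Local Notation aT := (invmx aA)^T.

Lemma E0_iff :
  (forall x : 'rV[K]_(m * n),
        tmap (mxf aA) (mxf aH) (x *m Phi) = tmap (mxf aH) (mxf aA) x *m Phi)
  <-> Phi *m Km aA aH = Km aH aA *m Phi.
Proof.
apply: (iff_trans _ (ext1_iff _ _)); split=> H x; have := H x; by rewrite !tmapK !mulmxA.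
Qed.

Lemma E1_iff :
  (forall (h : 'rV[K]_m) (a b : 'rV[K]_n),
        tmap (mxf mu) (mxf aH)
          (assocL (tmap (@id 'rV[K]_n) (mxf Phi)
             (assocR (tmap (mxf Phi) (@id 'rV[K]_n) (tens (tens h a) b)))))
        = tens (h *m aH) (hmul mu a b) *m Phi)
  <-> Km Phi 1%:M *m Rm K n m n *m Km 1%:M Phi *m Lm K n n m *m Km mu aH
      = Rm K m n n *m Km aH mu *m Phi.
Proof.
apply: (iff_trans _ (ext3_iff _ _)); split=> H h a b; have := H h a b;
rewrite tmap_id_r tmap_id_l !tmapK assocRK assocLK /hmul tens_mul -assocR_tens assocRK
  !mulmxA //.
Qed.

Lemma E2_iff :
  (forall (h : 'rV[K]_m) (a : 'rV[K]_n),
        tmap (mxf Phi) (@id 'rV[K]_m)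
          (assocL (tmap (@id 'rV[K]_m) (mxf Phi) (assocR (tens (h *m DH) (a *m aA)))))
        = assocL (tmap (mxf aA) (mxf DH) (tens h a *m Phi)))
  <-> Km DH aA *m Rm K m m n *m Km 1%:M Phi *m Lm K m n m *m Km Phi 1%:M
      = Phi *m Km aA DH *m Lm K n m m.
Proof.
apply: (iff_trans _ (ext2_iff _ _)); split=> H h a; have := H h a;
rewrite tmap_id_r tmap_id_l !tmapK assocRK !assocLK tens_mul !mulmxA //.
Qed.

Lemma E3_iff :
  (forall (h : 'rV[K]_m) (a : 'rV[K]_n),
        rcontract (cvfun eH) (tens h a *m Phi) = cvfun eH h *: a)
  <-> Phi *m RCm n (cvfun eH) = LCm n (cvfun eH).
Proof.
apply: (iff_trans _ (ext2_iff _ _)); split=> H h a; have := H h a;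
rewrite -(@lcontract_tens _ _ _ (cvfun eH) h a (islin_cvfun eH)) rcontractK lcontractK !mulmxA //.
Qed.

Lemma E4_iff :
  (forall h : 'rV[K]_m, tens h one *m Phi = tens one h)
  <-> TLm m one *m Phi = TRm m one.
Proof.
apply: (iff_trans _ (ext1_iff _ _)); split=> H h; have := H h;
rewrite tenslK tensrK !mulmxA //.
Qed.

Lemma M0_iff :
  (forall x, mxf phi (tmap (dual_alpha aA) (mxf aH) x) = tmap (mxf aH) (dual_alpha aA) (mxf phi x))
  <-> Km aT aH *m phi = phi *m Km aH aT.
Proof.
have E g q (x : V (n * g)) (C : 'M[K]_(g,q)) : tmap (dual_alpha aA) (mxf C) x = tmap (mxf aT) (mxf C) x.
  by apply: tmap_ext => // i; rewrite dual_alphaE.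
have E' g q (x : V (g * n)) (C : 'M[K]_(g,q)) : tmap (mxf C) (dual_alpha aA) x = tmap (mxf C) (mxf aT) x.
  by apply: tmap_ext => // i; rewrite dual_alphaE.
apply: (iff_trans _ (ext1_iff _ _)); split=> H x; have := H x;
rewrite /mxf E // E' !tmapK !mulmxA //.
Qed.

Lemma M1_iff :
  (forall b h, tmap (mxf phi) (@id (V n))
                    (assocL (tmap (@id (V n)) (mxf phi) (assocR (tens (dual_Delta mu aA b) (mxf aH h)))))
                  = assocL (tmap (mxf aH) (dual_Delta mu aA) (mxf phi (tens b h))))
  <-> Km (DBm mu aA) aH *m Rm K n n m *m Km 1%:M phi *m Lm K n m n *m Km phi 1%:M
      = phi *m Km aH (DBm mu aA) *m Lm K m n n.
Proof.
have E (x : V (m * n)) : tmap (mxf aH) (dual_Delta mu aA) x = tmap (mxf aH) (mxf (DBm mu aA)) x.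
  by apply: tmap_ext => // i; rewrite dual_DeltaK.
apply: (iff_trans _ (ext2_iff _ _)); split=> H b h; have := H b h;
rewrite /mxf E dual_DeltaK tens_mul tmap_id_r tmap_id_l !tmapK assocRK !assocLK !mulmxA //.
Qed.

Lemma M2_iff :
  (forall b h, assocL (tmap (@id (V m)) (mxf phi)
                    (assocR (tmap (mxf phi) (@id (V m)) (assocL (tens (dual_alpha aA b) (mxf DH h))))))
                  = tmap (mxf DH) (dual_alpha aA) (mxf phi (tens b h)))
  <-> Km aT DH *m Lm K n m m *m Km phi 1%:M *m Rm K m n m *m Km 1%:M phi *m Lm K m m n
      = phi *m Km DH aT.
Proof.
have E (x : V (m * n)) : tmap (mxf DH) (dual_alpha aA) x = tmap (mxf DH) (mxf aT) x.
  by apply: tmap_ext => // i; rewrite dual_alphaE.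
apply: (iff_trans _ (ext2_iff _ _)); split=> H b h; have := H b h;
rewrite E /mxf dual_alphaE tens_mul tmap_id_r tmap_id_l !tmapK assocRK !assocLK !mulmxA //.
Qed.

Lemma M3_iff :
  (forall b h, lcontract (cvfun eH) (mxf phi (tens b h)) = cvfun eH h *: b)
  <-> phi *m LCm n (cvfun eH) = RCm n (cvfun eH).
Proof.
apply: (iff_trans _ (ext2_iff _ _)); split=> H b h; have := H b h;
rewrite -(@rcontract_tens _ _ _ (cvfun eH) b h (islin_cvfun eH)) /mxf rcontractK lcontractK !mulmxA //.
Qed.

Lemma M4_iff :
  (forall b h, rcontract (dual_eps one) (mxf phi (tens b h)) = dual_eps one b *: h)
  <-> phi *m RCm m (dual_eps one) = LCm m (dual_eps one).
Proof.
apply: (iff_trans _ (ext2_iff _ _)); split=> H b h; have := H b h;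
rewrite -(@lcontract_tens _ _ _ (dual_eps one) b h (islin_evdr one)) /mxf rcontractK lcontractK !mulmxA //.
Qed.

End Cond.


Section Ent.
Variable K : fieldType.
Local Notation V n := 'rV[K]_n.
Local Notation bvec := (bvec K).
Local Notation "''M_' ( a , b )" := 'M[K]_(a, b) : type_scope.

Definition unpair n m (I : 'I_(n * m)) : 'I_n * 'I_m :=
  enum_val (cast_ord (esym (mxvec_cast n m)) I).
Lemma unpairK n m (i : 'I_n) (j : 'I_m) : unpair (mxvec_index i j) = (i, j).
Proof. by rewrite /unpair /mxvec_index cast_ordK enum_rankK. Qed.

Lemma mulKE_l a b a' b' p (A : 'M_(a, a')) (B : 'M_(b, b')) (Z : 'M_(a' * b', p)) i j J :
  (Km A B *m Z) (mxvec_index i j) J = \sum_i' \sum_j' A i i' * B j j' * Z (mxvec_index i' j') J.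
Proof.
rewrite mxE (big_pair (fun K0 => Km A B (mxvec_index i j) K0 * Z K0 J)).
by apply: eq_bigr => i' _; apply: eq_bigr => j' _; rewrite KmE.
Qed.

Lemma mulKE_r a b a' b' p (A : 'M_(a, a')) (B : 'M_(b, b')) (Z : 'M_(p, a * b)) I k l :
  (Z *m Km A B) I (mxvec_index k l) = \sum_k' \sum_l' Z I (mxvec_index k' l') * (A k' k * B l' l).
Proof.
rewrite mxE (big_pair (fun K0 => Z I K0 * Km A B K0 (mxvec_index k l))).
by apply: eq_bigr => i' _; apply: eq_bigr => j' _; rewrite KmE.
Qed.

Lemma mulK1E_l a b b' p (B : 'M_(b, b')) (Z : 'M_(a * b', p)) i j J :
  (Km 1%:M B *m Z) (mxvec_index i j) J = \sum_j' B j j' * Z (mxvec_index i j') J.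
Proof.
rewrite mulKE_l (eq_bigr (fun i' => (1%:M : 'M_a) i i' * \sum_j' B j j' * Z (mxvec_index i' j') J)).
  by rewrite sum_id_l.
by move=> i' _; rewrite mulr_sumr; apply: eq_bigr => j' _; rewrite mulrA.
Qed.

Lemma mulKE1_l a b a' p (A : 'M_(a, a')) (Z : 'M_(a' * b, p)) i j J :
  (Km A 1%:M *m Z) (mxvec_index i j) J = \sum_i' A i i' * Z (mxvec_index i' j) J.
Proof.
rewrite mulKE_l; apply: eq_bigr => i' _.
rewrite (eq_bigr (fun j' => (1%:M : 'M_b) j j' * (A i i' * Z (mxvec_index i' j') J))).
  by rewrite sum_id_l.
by move=> j' _; rewrite mulrCA mulrA.
Qed.

Lemma mulK1E_r a b b' p (B : 'M_(b, b')) (Z : 'M_(p, a * b)) I k l :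
  (Z *m Km 1%:M B) I (mxvec_index k l) = \sum_l' Z I (mxvec_index k l') * B l' l.
Proof.
rewrite mulKE_r (eq_bigr (fun k' => (\sum_l' Z I (mxvec_index k' l') * B l' l) * (1%:M : 'M_a) k' k)).
  by rewrite sum_id_r.
move=> k' _; rewrite big_distrl; apply: eq_bigr => l' _ /=. by rewrite [_ * B _ _]mulrC mulrA.
Qed.

Lemma mulKE1_r a b a' p (A : 'M_(a, a')) (Z : 'M_(p, a * b)) I k l :
  (Z *m Km A 1%:M) I (mxvec_index k l) = \sum_k' Z I (mxvec_index k' l) * A k' k.
Proof.
rewrite mulKE_r; apply: eq_bigr => k' _.
rewrite (eq_bigr (fun l' => (Z I (mxvec_index k' l') * A k' k) * (1%:M : 'M_b) l' l)).
  by rewrite sum_id_r.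
by move=> l' _; rewrite mulrA.
Qed.

Lemma mulLmE a b c p (Z : 'M_(a * b * c, p)) i j k J :
  (Lm K a b c *m Z) (mxvec_index i (mxvec_index j k)) J = Z (mxvec_index (mxvec_index i j) k) J.
Proof.
by rewrite [LHS]entryE mulmxA -!tens_bvec -assocLK assocL_tens !tens_bvec bvec_mul.
Qed.

Lemma mulRmE a b c p (Z : 'M_(a * (b * c), p)) i j k J :
  (Rm K a b c *m Z) (mxvec_index (mxvec_index i j) k) J = Z (mxvec_index i (mxvec_index j k)) J.
Proof.
by rewrite [LHS]entryE mulmxA -!tens_bvec -assocRK assocR_tens !tens_bvec bvec_mul.
Qed.

Lemma LmE a b c i j k i' j' k' :
  Lm K a b c (mxvec_index i (mxvec_index j k)) (mxvec_index (mxvec_index i' j') k')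
  = (i == i')%:R * (j == j')%:R * (k == k')%:R.
Proof.
rewrite entryE -!tens_bvec -assocLK assocL_tens !tens_bvec.
rewrite -/(coef2 (bvec (mxvec_index (mxvec_index i j) k)) (mxvec_index i' j') k') bvec2E.
have -> : ((mxvec_index i j == mxvec_index i' j')%:R : K) = (i == i')%:R * (j == j')%:R.
  by rewrite -bvec2E /coef2 bvecE.
by [].
Qed.

Lemma mulLmE_r a b c p (Z : 'M_(p, a * (b * c))) I i j k :
  (Z *m Lm K a b c) I (mxvec_index (mxvec_index i j) k) = Z I (mxvec_index i (mxvec_index j k)).
Proof.
rewrite mxE (big_pair (fun K0 => Z I K0 * Lm K a b c K0 _)).
rewrite (eq_bigr (fun i' => \sum_j' \sum_k' Z I (mxvec_index i' (mxvec_index j' k')) *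
                 ((i' == i)%:R * (j' == j)%:R * (k' == k)%:R))); last first.
  by move=> i' _; rewrite (big_pair (fun K0 => Z I (mxvec_index i' K0) * _));
     apply: eq_bigr => j' _; apply: eq_bigr => k' _; rewrite LmE.
transitivity (\sum_i' (i' == i)%:R * \sum_j' \sum_k' Z I (mxvec_index i' (mxvec_index j' k')) *
                 ((j' == j)%:R * (k' == k)%:R)).
  apply: eq_bigr => i' _; rewrite mulr_sumr; apply: eq_bigr => j' _; rewrite mulr_sumr.
  by apply: eq_bigr => k' _; rewrite [RHS]mulrCA !mulrA.
rewrite (sum_delta_l' (fun i' => \sum_j' \sum_k' Z I (mxvec_index i' (mxvec_index j' k')) * ((j' == j)%:R * (k' == k)%:R))).
exact: (sum2_delta (fun j' k' => Z I (mxvec_index i (mxvec_index j' k')))).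
Qed.

End Ent.


Section PT.
Variable K : fieldType.
Local Notation V n := 'rV[K]_n.
Local Notation bvec := (bvec K).
Local Notation "''M_' ( a , b )" := 'M[K]_(a, b) : type_scope.

Definition pt a b c d (Z : 'M_(a * b, c * d)) : 'M_(c * a, d * b) :=
  \matrix_(I, J) Z (mxvec_index (unpair I).2 (unpair J).2) (mxvec_index (unpair I).1 (unpair J).1).

Lemma ptE a b c d (Z : 'M_(a * b, c * d)) k p j l :
  pt Z (mxvec_index k p) (mxvec_index j l) = Z (mxvec_index p l) (mxvec_index k j).
Proof. by rewrite mxE (unpairK k p) (unpairK j l). Qed.

Lemma pt_inj a b c d (Z1 Z2 : 'M_(a * b, c * d)) : pt Z1 = pt Z2 -> Z1 = Z2.
Proof.
move=> H; apply/matrixP => I J; case/mxvec_indexP: I => p l; case/mxvec_indexP: J => k j.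
by rewrite -(ptE Z1) -(ptE Z2) H.
Qed.

Lemma pt_mulKl a b c d a' b' (B : 'M_(a', a)) (C : 'M_(b', b)) (Z : 'M_(a * b, c * d)) :
  pt (Km B C *m Z) = Km 1%:M B *m pt Z *m Km 1%:M C^T.
Proof.
apply/matrixP => I J; case/mxvec_indexP: I => k p'; case/mxvec_indexP: J => j l'.
rewrite ptE mulKE_l mulK1E_r [LHS]exchange_big /=; apply: eq_bigr => l _.
rewrite mulK1E_l big_distrl /=; apply: eq_bigr => p _.
by rewrite ptE !mxE mulrAC.
Qed.

Lemma pt_mulKr a b c d c' d' (A : 'M_(c, c')) (D : 'M_(d, d')) (Z : 'M_(a * b, c * d)) :
  pt (Z *m Km A D) = Km A^T 1%:M *m pt Z *m Km D 1%:M.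
Proof.
apply/matrixP => I J; case/mxvec_indexP: I => k' p; case/mxvec_indexP: J => j' l.
rewrite ptE mulKE_r mulKE1_r [LHS]exchange_big /=; apply: eq_bigr => j _.
rewrite mulKE1_l big_distrl /=; apply: eq_bigr => k _.
by rewrite ptE !mxE mulrA [_ * A k k']mulrC.
Qed.

End PT.


Section S7.
Variable K : fieldType.
Local Notation V n := 'rV[K]_n.
Local Notation bvec := (bvec K).
Local Notation "''M_' ( a , b )" := 'M[K]_(a, b) : type_scope.

Lemma lcontractE n m (e : V n -> K) (x : V (n * m)) j0 :
  (lcontract e x) 0 j0 = \sum_i coef2 x i j0 * e (bvec i).
Proof.
rewrite /lcontract summxE; apply: eq_bigr => i _; rewrite summxE.
rewrite (eq_bigr (fun j => coef2 x i j * e (bvec i) * (j == j0)%:R)) ?sum_delta_r //.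
by move=> j _; rewrite !mxE eqxx eq_sym.
Qed.

Lemma rcontractE n m (e : V m -> K) (x : V (n * m)) i0 :
  (rcontract e x) 0 i0 = \sum_j coef2 x i0 j * e (bvec j).
Proof.
rewrite /rcontract summxE.
rewrite (eq_bigr (fun i => (\sum_j coef2 x i j * e (bvec j)) * (i == i0)%:R)) ?sum_delta_r //.
move=> i _; rewrite summxE big_distrl; apply: eq_bigr => j _.
by rewrite !mxE eqxx eq_sym.
Qed.

Lemma phi_pt n m (phi : 'M_(n * m, m * n)) (Phi : 'M_(m * n, n * m)) :
  (forall (f a : 'rV[K]_n) (h : 'rV[K]_m),
      lcontract (evd f) (tens h a *m Phi)
      = rcontract (fun g => evd g a) (tens f h *m phi)) -> phi = pt Phi.
Proof.
move=> C; apply/matrixP => I J; case/mxvec_indexP: I => k p; case/mxvec_indexP: J => j l.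
rewrite (ptE Phi k p j l).
have := congr1 (fun v : V m => v 0 j) (C (bvec k) (bvec l) (bvec p)).
rewrite lcontractE rcontractE !tens_bvec.
rewrite (eq_bigr (fun i => Phi (mxvec_index p l) (mxvec_index i j) * (i == k)%:R)); last first.
  by move=> i _; rewrite /coef2 bvec_mul evd_bvec_r bvecE eq_sym.
rewrite sum_delta_r => ->.
rewrite (eq_bigr (fun i => phi (mxvec_index k p) (mxvec_index j i) * (i == l)%:R)) ?sum_delta_r //.
by move=> i _; rewrite /coef2 bvec_mul evd_bvec_l bvecE eq_sym.
Qed.

Lemma trmx_unit n (A : 'M[K]_n) : A \in unitmx ->
  A^T *m (invmx A)^T = 1%:M /\ (invmx A)^T *m A^T = 1%:M.
Proof. by move=> uA; rewrite -!trmx_mul mulVmx // mulmxV // trmx1. Qed.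

Lemma E0M0 n m (aA : 'M_n) (aH : 'M_m) (Phi : 'M_(m * n, n * m)) : aA \in unitmx ->
  (Phi *m Km aA aH = Km aH aA *m Phi) <->
  (Km (invmx aA)^T aH *m pt Phi = pt Phi *m Km aH (invmx aA)^T).
Proof.
move=> uA; set aT := (invmx aA)^T; set P := pt Phi.
have [h1 h2] : aA^T *m aT = 1%:M /\ aT *m aA^T = 1%:M by exact: trmx_unit.
have eq1 : (Phi *m Km aA aH = Km aH aA *m Phi) <->
   (Km aA^T 1%:M *m P *m Km aH 1%:M = Km 1%:M aH *m P *m Km 1%:M aA^T).
  rewrite /P -pt_mulKr -pt_mulKl; split=> [->//|]; exact: pt_inj.
apply: (iff_trans eq1); split=> H.
- have L : Km aT 1%:M *m (Km aA^T 1%:M *m P *m Km aH 1%:M) *m Km 1%:M aT = P *m Km aH aT.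
    by rewrite !mulmxA Km_mul h2 mulmx1 Km1 mul1mx -mulmxA Km_mul mulmx1 mul1mx.
  have R : Km aT 1%:M *m (Km 1%:M aH *m P *m Km 1%:M aA^T) *m Km 1%:M aT = Km aT aH *m P.
    by rewrite !mulmxA Km_mul mulmx1 mul1mx -mulmxA Km_mul mulmx1 h1 Km1 mulmx1.
  by rewrite -R -L H.
- have L : Km aA^T 1%:M *m (P *m Km aH aT) *m Km 1%:M aA^T = Km aA^T 1%:M *m P *m Km aH 1%:M.
    by rewrite -!mulmxA Km_mul mulmx1 h2.
  have R : Km aA^T 1%:M *m (Km aT aH *m P) *m Km 1%:M aA^T = Km 1%:M aH *m P *m Km 1%:M aA^T.
    by rewrite !mulmxA Km_mul h1 mul1mx.
  by rewrite -L -R H.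
Qed.

End S7.


Section S8.
Variable K : fieldType.
Local Notation V n := 'rV[K]_n.
Local Notation bvec := (bvec K).
Local Notation "''M_' ( a , b )" := 'M[K]_(a, b) : type_scope.

Lemma mulRCmE a n m (e : V m -> K) (Z : 'M_(a, n * m)) I i0 :
  (Z *m RCm n e) I i0 = \sum_j Z I (mxvec_index i0 j) * e (bvec j).
Proof.
rewrite [LHS]entryE mulmxA -rcontractK rcontractE; apply: eq_bigr => j _.
by rewrite /coef2 bvec_mul.
Qed.

Lemma mulLCmE a n m (e : V n -> K) (Z : 'M_(a, n * m)) I j0 :
  (Z *m LCm m e) I j0 = \sum_i Z I (mxvec_index i j0) * e (bvec i).
Proof.
rewrite [LHS]entryE mulmxA -lcontractK lcontractE; apply: eq_bigr => j _.
by rewrite /coef2 bvec_mul.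
Qed.

Lemma RCmE n m (e : V m -> K) i j i0 :
  RCm n e (mxvec_index i j) i0 = e (bvec j) * (i == i0)%:R.
Proof.
rewrite entryE -rcontractK rcontractE -tens_bvec.
rewrite (eq_bigr (fun j' => e (bvec j') * (i == i0)%:R * (j == j')%:R)) ?sum_delta_r' //.
by move=> j' _; rewrite coef2_tens !bvecE; ring.
Qed.

Lemma LCmE n m (e : V n -> K) i j j0 :
  LCm m e (mxvec_index i j) j0 = e (bvec i) * (j == j0)%:R.
Proof.
rewrite entryE -lcontractK lcontractE -tens_bvec.
rewrite (eq_bigr (fun i' => e (bvec i') * (j == j0)%:R * (i == i')%:R)) ?sum_delta_r' //.
by move=> i' _; rewrite coef2_tens !bvecE; ring.
Qed.

Lemma TLmE m n p (v : V n) (Z : 'M_(m * n, p)) i J :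
  (TLm m v *m Z) i J = \sum_l v 0 l * Z (mxvec_index i l) J.
Proof.
rewrite [LHS]entryE mulmxA -tenslK mxE.
rewrite (big_pair (fun K0 => tens (bvec i) v 0 K0 * Z K0 J)).
rewrite (eq_bigr (fun i' => (i == i')%:R * \sum_l v 0 l * Z (mxvec_index i' l) J)) ?sum_delta_l //.
move=> i' _; rewrite mulr_sumr; apply: eq_bigr => l _.
by rewrite -[tens _ _ 0 _]/(coef2 _ i' l) coef2_tens bvecE mulrA.
Qed.

Lemma TRmE m n (u : V n) i k j :
  TRm m u i (mxvec_index k j) = u 0 k * (i == j)%:R.
Proof.
by rewrite entryE -tensrK -[tens _ _ 0 _]/(coef2 _ k j) coef2_tens bvecE.
Qed.

Lemma E3M3 n m (e : V m -> K) (Phi : 'M_(m * n, n * m)) :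
  (Phi *m RCm n e = LCm n e) <-> (pt Phi *m LCm n e = RCm n e).
Proof.
split=> /matrixP H; apply/matrixP => I k; case/mxvec_indexP: I => i j.
- have := H (mxvec_index j k) i.
  rewrite mulRCmE LCmE mulLCmE RCmE => E; rewrite eq_sym -E.
  by apply: eq_bigr => j' _; rewrite (ptE Phi).
- have := H (mxvec_index k i) j.
  rewrite mulRCmE LCmE mulLCmE RCmE => E; rewrite eq_sym -E.
  by apply: eq_bigr => j' _; rewrite (ptE Phi).
Qed.

Lemma E4M4 n m (one : V n) (Phi : 'M_(m * n, n * m)) :
  (TLm m one *m Phi = TRm m one) <->
  (pt Phi *m RCm m (dual_eps one) = LCm m (dual_eps one)).
Proof.
have e1 i : dual_eps one (bvec i) = one 0 i by rewrite /dual_eps evd_bvec_l.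
split=> /matrixP H; apply/matrixP => I k.
- case/mxvec_indexP: I => i j; rewrite mulRCmE LCmE e1.
  have := H j (mxvec_index i k); rewrite TLmE TRmE => <-.
  by apply: eq_bigr => l _; rewrite ptE e1 mulrC.
- case/mxvec_indexP: k => i j.
  have := H (mxvec_index i I) j; rewrite mulRCmE LCmE e1 TLmE TRmE => <-.
  by apply: eq_bigr => l _; rewrite ptE e1 mulrC.
Qed.

End S8.


Section S9.
Variable K : fieldType.
Local Notation V n := 'rV[K]_n.
Local Notation bvec := (bvec K).
Local Notation "''M_' ( a , b )" := 'M[K]_(a, b) : type_scope.

Definition rho2 a b c d e (Z : 'M_(a * b, c * d * e)) : 'M_(c * a, d * e * b) :=
  \matrix_(I, J) Z (mxvec_index (unpair I).2 (unpair J).2)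
                   (mxvec_index (mxvec_index (unpair I).1 (unpair (unpair J).1).1) (unpair (unpair J).1).2).

Lemma rho2E a b c d e (Z : 'M_(a * b, c * d * e)) k p j j3 l :
  rho2 Z (mxvec_index k p) (mxvec_index (mxvec_index j j3) l)
  = Z (mxvec_index p l) (mxvec_index (mxvec_index k j) j3).
Proof. by rewrite mxE (unpairK k p) (unpairK (mxvec_index j j3) l) (unpairK j j3). Qed.

Lemma rho2_inj a b c d e (Z1 Z2 : 'M_(a * b, c * d * e)) : rho2 Z1 = rho2 Z2 -> Z1 = Z2.
Proof.
move=> H; apply/matrixP => I J; case/mxvec_indexP: I => p l; case/mxvec_indexP: J => J1 j3.
case/mxvec_indexP: J1 => k j.
by rewrite -(rho2E Z1) -(rho2E Z2) H.
Qed.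

Lemma cl_id_r n (x : 'I_n -> K) c j0 : \sum_j x j * (c * (1%:M : 'M_n) j j0) = x j0 * c.
Proof.
rewrite (eq_bigr (fun j => (x j * c) * (1%:M : 'M_n) j j0)) ?(sum_id_r (fun j => x j * c)) //.
by move=> j _; rewrite mulrA.
Qed.

Lemma rho2_mulK1l a b b' c d e (A : 'M_(b', b)) (Z : 'M_(a * b, c * d * e)) :
  rho2 (Km 1%:M A *m Z) = rho2 Z *m Km 1%:M A^T.
Proof.
apply/matrixP => I J; case/mxvec_indexP: I => k p; case/mxvec_indexP: J => J1 l.
case/mxvec_indexP: J1 => j j3.
rewrite rho2E mulK1E_l mulK1E_r; apply: eq_bigr => l' _.
by rewrite rho2E mxE mulrC.
Qed.

Lemma rho2_mulKK1r a b c c' d e (B : 'M_(c, c')) (Z : 'M_(a * b, c * d * e)) :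
  rho2 (Z *m Km (Km B (1%:M : 'M_d)) (1%:M : 'M_e)) = Km B^T 1%:M *m rho2 Z.
Proof.
apply/matrixP => I J; case/mxvec_indexP: I => k p; case/mxvec_indexP: J => J1 l.
case/mxvec_indexP: J1 => j j3.
rewrite rho2E mulKE1_r mulKE1_l big_pair; apply: eq_bigr => k' _.
under eq_bigr => j' _ do rewrite KmE.
by rewrite cl_id_r rho2E mxE mulrC.
Qed.

End S9.


Section S10.
Variable K : fieldType.
Local Notation V n := 'rV[K]_n.
Local Notation bvec := (bvec K).
Local Notation "''M_' ( a , b )" := 'M[K]_(a, b) : type_scope.

Lemma cl_dd n m (F : 'I_n -> 'I_m -> K) c a0 b0 :
  \sum_a \sum_b F a b * (c * (a == a0)%:R * (b == b0)%:R) = c * F a0 b0.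
Proof.
rewrite -(sum2_delta (fun a b => c * F a b)); apply: eq_bigr => a _; apply: eq_bigr => b _.
ring.
Qed.

Lemma cl_d1 n m (G : 'I_n -> 'I_m -> K) (H : 'I_m -> K) a0 :
  \sum_a \sum_b G a b * ((a == a0)%:R * H b) = \sum_b G a0 b * H b.
Proof.
rewrite -(sum_delta_l' (fun a => \sum_b G a b * H b)); apply: eq_bigr => a _.
rewrite mulr_sumr; apply: eq_bigr => b _; ring.
Qed.

Variables (n m : nat) (DH : 'M_(m, m * m)) (Phi : 'M_(m * n, n * m)).

Lemma B4 : rho2 (Phi *m (Km 1%:M DH *m Lm K n m m)) = pt Phi *m Km DH 1%:M.
Proof.
apply/matrixP => I J; case/mxvec_indexP: I => k p; case/mxvec_indexP: J => J1 l.
case/mxvec_indexP: J1 => j j3.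
rewrite rho2E mulKE1_r mxE big_pair.
under eq_bigr => k2 _ do under eq_bigr => j0 _ do rewrite mulK1E_l big_pair.
under eq_bigr => k2 _ do under eq_bigr => j0 _ do under eq_bigr => j1 _ do under eq_bigr => j2 _ do rewrite LmE.
under eq_bigr => k2 _ do under eq_bigr => j0 _ do rewrite cl_dd.
rewrite cl_d1; apply: eq_bigr => j0 _.
by rewrite ptE.
Qed.

Lemma B3 : rho2 (Km DH 1%:M *m (Rm K m m n *m (Km 1%:M Phi *m (Lm K m n m *m Km Phi 1%:M))))
  = Km 1%:M DH *m (Lm K n m m *m (Km (pt Phi) 1%:M *m (Rm K m n m *m (Km 1%:M (pt Phi) *m Lm K m m n)))).
Proof.
apply/matrixP => I J; case/mxvec_indexP: I => k p; case/mxvec_indexP: J => J1 l.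
case/mxvec_indexP: J1 => j j3.
rewrite rho2E mulKE1_l mulK1E_l; apply: eq_bigr => J0 _; case/mxvec_indexP: J0 => j1 j2.
congr (_ * _).
rewrite mulRmE mulK1E_l mulLmE mulKE1_l.
transitivity (\sum_l2 Phi (mxvec_index j1 l2) (mxvec_index k j) * Phi (mxvec_index j2 l) (mxvec_index l2 j3)).
  rewrite big_pair.
  under eq_bigr => k2 _ do under eq_bigr => j5 _ do rewrite mulLmE KmE.
  under eq_bigr => k2 _ do rewrite cl_id_r.
  by apply: eq_bigr => k2 _; rewrite mulrC.
symmetry; rewrite big_pair.
under eq_bigr => j6 _ do under eq_bigr => l2 _ do rewrite mulRmE mulK1E_l big_pair.
under eq_bigr => j6 _ do under eq_bigr => l2 _ do under eq_bigr => j7 _ do under eq_bigr => l3 _ do rewrite LmE.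
under eq_bigr => j6 _ do under eq_bigr => l2 _ do rewrite cl_dd.
rewrite cl_d1; apply: eq_bigr => l2 _.
by rewrite !ptE.
Qed.

Lemma E2M2 (aA : 'M_n) : aA \in unitmx ->
 (Km DH aA *m Rm K m m n *m Km 1%:M Phi *m Lm K m n m *m Km Phi 1%:M = Phi *m Km aA DH *m Lm K n m m)
 <-> (Km (invmx aA)^T DH *m Lm K n m m *m Km (pt Phi) 1%:M *m Rm K m n m *m Km 1%:M (pt Phi) *m Lm K m m n
      = pt Phi *m Km DH (invmx aA)^T).
Proof.
move=> uA; set aT := (invmx aA)^T; set P := pt Phi.
have [h1 h2] : aA^T *m aT = 1%:M /\ aT *m aA^T = 1%:M by exact: trmx_unit.
set Ec := Km DH 1%:M *m (Rm K m m n *m (Km 1%:M Phi *m (Lm K m n m *m Km Phi 1%:M))).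
set Yc := Phi *m (Km 1%:M DH *m Lm K n m m).
set Mc := Km 1%:M DH *m (Lm K n m m *m (Km P 1%:M *m (Rm K m n m *m (Km 1%:M P *m Lm K m m n)))).
set Yd := P *m Km DH 1%:M.
have eL : Km DH aA *m Rm K m m n *m Km 1%:M Phi *m Lm K m n m *m Km Phi 1%:M = Km 1%:M aA *m Ec.
  by rewrite /Ec !mulmxA Km_mul mul1mx mulmx1.
have eR : Phi *m Km aA DH *m Lm K n m m = Yc *m Km (Km aA 1%:M) (1%:M : 'M_m).
  by rewrite /Yc -!mulmxA Lm_nat Km1 (mulmxA (Km 1%:M DH)) Km_mul mul1mx mulmx1.
have fL : Km aT DH *m Lm K n m m *m Km P 1%:M *m Rm K m n m *m Km 1%:M P *m Lm K m m n = Km aT 1%:M *m Mc.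
  by rewrite /Mc !mulmxA Km_mul mul1mx mulmx1.
have fR : P *m Km DH aT = Yd *m Km (1%:M : 'M_(m * m)) aT.
  by rewrite /Yd -mulmxA Km_mul mul1mx mulmx1.
rewrite eL eR fL fR.
have step : (Km 1%:M aA *m Ec = Yc *m Km (Km aA 1%:M) (1%:M : 'M_m)) <->
            (Mc *m Km 1%:M aA^T = Km aA^T 1%:M *m Yd).
  have e1 : rho2 (Km 1%:M aA *m Ec) = Mc *m Km 1%:M aA^T by rewrite rho2_mulK1l /Ec B3.
  have e2 : rho2 (Yc *m Km (Km aA 1%:M) (1%:M : 'M_m)) = Km aA^T 1%:M *m Yd.
    by rewrite rho2_mulKK1r /Yc B4.
  split=> H; [by rewrite -e1 -e2 H | apply: rho2_inj; by rewrite e1 e2].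
apply: (iff_trans step); clearbody Mc Yd; split=> H.
- have L : Km aT 1%:M *m (Mc *m Km 1%:M aA^T) *m Km (1%:M : 'M_(m * m)) aT = Km aT 1%:M *m Mc.
    by rewrite -!mulmxA Km_mul mulmx1 h1 Km1 mulmx1.
  have R : Km aT 1%:M *m (Km aA^T 1%:M *m Yd) *m Km (1%:M : 'M_(m * m)) aT = Yd *m Km 1%:M aT.
    by rewrite !mulmxA Km_mul mulmx1 h2 Km1 mul1mx.
  by rewrite -L -R H.
- have L : Km aA^T 1%:M *m (Km aT 1%:M *m Mc) *m Km (1%:M : 'M_(m * m)) aA^T = Mc *m Km 1%:M aA^T.
    by rewrite !mulmxA Km_mul mulmx1 h1 Km1 mul1mx.
  have R : Km aA^T 1%:M *m (Yd *m Km (1%:M : 'M_(m * m)) aT) *m Km (1%:M : 'M_(m * m)) aA^T = Km aA^T 1%:M *m Yd.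
    by rewrite -!mulmxA Km_mul mulmx1 h2 Km1 mulmx1.
  by rewrite -L -R H.
Qed.

End S10.


Section S11.
Variable K : fieldType.
Local Notation V n := 'rV[K]_n.
Local Notation bvec := (bvec K).
Local Notation "''M_' ( a , b )" := 'M[K]_(a, b) : type_scope.

Definition rho1 a b c d e (Z : 'M_(a * b * c, d * e)) : 'M_(d * a, e * c * b) :=
  \matrix_(I, J) Z (mxvec_index (mxvec_index (unpair I).2 (unpair J).2) (unpair (unpair J).1).2)
                   (mxvec_index (unpair I).1 (unpair (unpair J).1).1).

Lemma rho1E a b c d e (Z : 'M_(a * b * c, d * e)) k p j4 l4 l3 :
  rho1 Z (mxvec_index k p) (mxvec_index (mxvec_index j4 l4) l3)
  = Z (mxvec_index (mxvec_index p l3) l4) (mxvec_index k j4).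
Proof. by rewrite mxE (unpairK k p) (unpairK (mxvec_index j4 l4) l3) (unpairK j4 l4). Qed.

Lemma rho1_inj a b c d e (Z1 Z2 : 'M_(a * b * c, d * e)) : rho1 Z1 = rho1 Z2 -> Z1 = Z2.
Proof.
move=> H; apply/matrixP => I J; case/mxvec_indexP: I => I1 l4; case/mxvec_indexP: I1 => p l3.
case/mxvec_indexP: J => k j4.
by rewrite -(rho1E Z1) -(rho1E Z2) H.
Qed.

Lemma rho1_mulK a a' b c d e (B : 'M_(a', a)) (Z : 'M_(a * b * c, d * e)) :
  Km 1%:M B *m rho1 Z = rho1 (Km (Km B (1%:M : 'M[K]_b)) (1%:M : 'M[K]_c) *m Z).
Proof.
apply/matrixP => I J; case/mxvec_indexP: I => k p'; case/mxvec_indexP: J => J1 l3.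
case/mxvec_indexP: J1 => j4 l4.
rewrite rho1E mulK1E_l mulKE1_l big_pair; apply: eq_bigr => p _.
under eq_bigr => l _ do rewrite KmE.
rewrite (eq_bigr (fun l => (1%:M : 'M[K]_b) l3 l * (B p' p * Z (mxvec_index (mxvec_index p l) l4) (mxvec_index k j4)))).
  by rewrite sum_id_l rho1E.
by move=> l _; ring.
Qed.

Variables (n m : nat) (mu : 'M_(n * n, n)) (aA : 'M[K]_n) (aH : 'M[K]_m) (Phi : 'M_(m * n, n * m)).

Lemma B2 : rho1 (Rm K m n n *m (Km (1%:M : 'M[K]_m) (mu *m invmx aA *m invmx aA) *m (Phi *m Km (1%:M : 'M[K]_n) aH)))
  = pt Phi *m (Km aH (DBm mu aA) *m Lm K m n n).
Proof.
apply/matrixP => I J; case/mxvec_indexP: I => k p; case/mxvec_indexP: J => J1 l3.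
case/mxvec_indexP: J1 => j4 l4.
rewrite rho1E mulRmE mulK1E_l mxE big_pair.
under [RHS]eq_bigr => j _ do under eq_bigr => l _ do rewrite mulLmE_r KmE DBmE ptE.
rewrite exchange_big /=; apply: eq_bigr => l _.
rewrite mulK1E_r mulr_sumr; apply: eq_bigr => j _.
ring.
Qed.

Lemma B1 : rho1 (Km Phi (1%:M : 'M[K]_n) *m (Rm K n m n *m (Km (1%:M : 'M[K]_n) Phi *m (Lm K n n m *m Km (mu *m invmx aA *m invmx aA) (1%:M : 'M[K]_m)))))
  = Km (DBm mu aA) (1%:M : 'M[K]_m) *m (Rm K n n m *m (Km (1%:M : 'M[K]_n) (pt Phi) *m (Lm K n m n *m Km (pt Phi) (1%:M : 'M[K]_n)))).
Proof.
apply/matrixP => I J; case/mxvec_indexP: I => k p; case/mxvec_indexP: J => J1 l3.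
case/mxvec_indexP: J1 => j4 l4.
rewrite rho1E mulKE1_l mulKE1_l !big_pair.
under eq_bigr => a _ do under eq_bigr => b _ do rewrite mulRmE mulK1E_l big_pair.
under eq_bigr => a _ do under eq_bigr => b _ do under eq_bigr => c _ do under eq_bigr => d _ do rewrite mulLmE KmE.
under eq_bigr => a _ do under eq_bigr => b _ do under eq_bigr => c _ do rewrite cl_id_r.
under [RHS]eq_bigr => i _ do under eq_bigr => j _ do rewrite mulRmE mulK1E_l big_pair.
under [RHS]eq_bigr => i _ do under eq_bigr => j _ do under eq_bigr => c _ do under eq_bigr => d _ do rewrite mulLmE KmE.
under [RHS]eq_bigr => i _ do under eq_bigr => j _ do under eq_bigr => c _ do rewrite cl_id_r.
under [RHS]eq_bigr => i _ do under eq_bigr => j _ do rewrite DBmE mulr_sumr.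
under [RHS]eq_bigr => i _ do under eq_bigr => j _ do under eq_bigr => c _ do rewrite !ptE.
rewrite [RHS]exchange_big /=; apply: eq_bigr => a _.
rewrite [RHS]exchange_big /=; apply: eq_bigr => b _.
rewrite mulr_sumr; apply: eq_bigr => c _.
ring.
Qed.

End S11.


Section S12.
Variable K : fieldType.
Variables (n m : nat) (mu : 'M[K]_(n * n, n)) (aA : 'M[K]_n) (aH : 'M[K]_m) (Phi : 'M[K]_(m * n, n * m)).
Hypotheses (uA : aA \in unitmx) (uH : aH \in unitmx) (E0 : Phi *m Km aA aH = Km aH aA *m Phi).

Local Notation a' := (invmx aA).
Local Notation b' := (invmx aH).

Lemma G1 : Km (1%:M : 'M[K]_m) a' *m Phi = Km aH (1%:M : 'M[K]_n) *m Phi *m Km a' b'.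
Proof.
have -> : Km aH (1%:M : 'M[K]_n) = Km 1%:M a' *m Km aH aA by rewrite Km_mul mul1mx mulVmx.
rewrite -(mulmxA (Km 1%:M a')) -E0 -!mulmxA Km_mul mulmxV // mulmxV // Km1 mulmx1.
by [].
Qed.

Lemma G2 : Km (1%:M : 'M[K]_m) (a' *m a') *m Phi
   = Km (aH *m aH) (1%:M : 'M[K]_n) *m Phi *m Km (a' *m a') (b' *m b').
Proof.
have -> : Km (1%:M : 'M[K]_m) (a' *m a') = Km 1%:M a' *m Km 1%:M a' by rewrite Km_mul mulmx1.
have c1 : Km (1%:M : 'M[K]_m) a' *m Km aH 1%:M = Km aH 1%:M *m Km 1%:M a'.
  by rewrite !Km_mul !mul1mx !mulmx1.
rewrite -mulmxA G1 !mulmxA c1 -(mulmxA (Km aH 1%:M)) G1 !mulmxA Km_mul mulmx1.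
by rewrite -mulmxA Km_mul.
Qed.

Lemma E1M1 :
 (Km Phi (1%:M : 'M[K]_n) *m Rm K n m n *m Km (1%:M : 'M[K]_n) Phi *m Lm K n n m *m Km mu aH
   = Rm K m n n *m Km aH mu *m Phi)
 <-> (Km (DBm mu aA) aH *m Rm K n n m *m Km (1%:M : 'M[K]_n) (pt Phi) *m Lm K n m n *m Km (pt Phi) (1%:M : 'M[K]_n)
      = pt Phi *m Km aH (DBm mu aA) *m Lm K m n n).
Proof.
set T := Km Phi (1%:M : 'M[K]_n) *m (Rm K n m n *m (Km (1%:M : 'M[K]_n) Phi *m (Lm K n n m *m Km mu (1%:M : 'M[K]_m)))).
set W := Rm K m n n *m Km aH mu *m Phi.
set Kb := Km (Km aH (1%:M : 'M[K]_n)) (1%:M : 'M[K]_n).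
have eE : Km Phi (1%:M : 'M[K]_n) *m Rm K n m n *m Km (1%:M : 'M[K]_n) Phi *m Lm K n n m *m Km mu aH
   = T *m Km 1%:M aH.
  by rewrite /T !mulmxA -[RHS]mulmxA Km_mul mulmx1 mul1mx.
have eT' : Km Phi (1%:M : 'M[K]_n) *m (Rm K n m n *m (Km (1%:M : 'M[K]_n) Phi *m (Lm K n n m *m
             Km (mu *m a' *m a') (1%:M : 'M[K]_m)))) = T *m Km (a' *m a') 1%:M.
  by rewrite /T -!mulmxA Km_mul mulmx1 mulmxA.
have eML : Km (DBm mu aA) aH *m Rm K n n m *m Km (1%:M : 'M[K]_n) (pt Phi) *m Lm K n m n *m Km (pt Phi) (1%:M : 'M[K]_n)
   = rho1 (Kb *m (T *m Km (a' *m a') 1%:M)).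
  rewrite /Kb -rho1_mulK -eT' B1 !mulmxA Km_mul mulmx1 mul1mx.
  by [].
have eMR : pt Phi *m Km aH (DBm mu aA) *m Lm K m n n
   = rho1 (Rm K m n n *m (Km (1%:M : 'M[K]_m) (mu *m a' *m a') *m (Phi *m Km (1%:M : 'M[K]_n) aH))).
  by rewrite B2 mulmxA.
have key : Rm K m n n *m (Km (1%:M : 'M[K]_m) (mu *m a' *m a') *m (Phi *m Km (1%:M : 'M[K]_n) aH))
   = Kb *m W *m Km (a' *m a') b'.
  rewrite -(mulmxA mu) -(mul1mx (1%:M : 'M[K]_m)) -Km_mul -mulmxA (mulmxA _ Phi) G2.
  rewrite !mulmxA -(mulmxA (Rm K m n n) (Km 1%:M mu)) Km_mul mul1mx mulmx1.
  have -> : Km (aH *m aH) mu = Km aH (1%:M : 'M[K]_(n * n)) *m Km aH mu by rewrite Km_mul mul1mx.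
  have Rn : Rm K m n n *m Km aH (1%:M : 'M[K]_(n * n)) = Kb *m Rm K m n n.
    by rewrite -(Km1 K n n) Rm_nat.
  rewrite mulmxA Rn -(mulmxA _ (Km (a' *m a') (b' *m b'))) Km_mul mulmx1 -(mulmxA b') mulVmx // mulmx1.
  by [].
have kb : Km (Km b' (1%:M : 'M[K]_n)) (1%:M : 'M[K]_n) *m Kb = 1%:M.
  by rewrite /Kb Km_mul Km_mul mulVmx // !mulmx1 !Km1.
rewrite eE eML eMR key; clearbody T W Kb.
have g1 : (a' *m a') *m (aA *m aA) = 1%:M.
  by rewrite mulmxA -(mulmxA a') mulVmx // mulmx1 mulVmx.
split=> H.
- rewrite -H; congr rho1.
  by rewrite -!mulmxA Km_mul mul1mx mulmxV.
- have := congr1 (fun X => Km (Km b' (1%:M : 'M[K]_n)) (1%:M : 'M[K]_n) *m X *m Km (aA *m aA) aH) (rho1_inj H).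
  by rewrite /= !mulmxA kb !mul1mx -!mulmxA !Km_mul g1 mul1mx mulVmx // Km1 mulmx1.
Qed.

End S12.

Unset Implicit Arguments.

Theorem theorem5p1 (K : fieldType) (n m : nat)
    (mu : 'M[K]_(n * n, n)) (one : 'rV[K]_n) (aA : 'M[K]_n)
    (aH : 'M[K]_m) (DH : 'M[K]_(m, m * m)) (eH : 'cV[K]_m)
    (phi : 'M[K]_(n * m, m * n)) (Phi : 'M[K]_(m * n, n * m)) :
  [pchar K] =i pred0 ->
  aA \in unitmx -> aH \in unitmx ->
  is_hom_algebra mu one aA ->
  is_hom_coalgebra (mxf aH) (mxf DH) (cvfun eH) ->
  (forall (f a : 'rV[K]_n) (h : 'rV[K]_m),
      lcontract (evd f) (tens h a *m Phi)
      = rcontract (fun g => evd g a) (tens f h *m phi)) ->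
  is_hom_cotwistor (dual_alpha aA) (dual_Delta mu aA) (dual_eps one)
                   (mxf aH) (mxf DH) (cvfun eH) (mxf phi)
  <->
  [/\ forall x : 'rV[K]_(m * n),
        tmap (mxf aA) (mxf aH) (x *m Phi) = tmap (mxf aH) (mxf aA) x *m Phi,
      (* E1 *)
      forall (h : 'rV[K]_m) (a b : 'rV[K]_n),
        tmap (mxf mu) (mxf aH)
          (assocL (tmap (@id 'rV[K]_n) (mxf Phi)
             (assocR (tmap (mxf Phi) (@id 'rV[K]_n) (tens (tens h a) b)))))
        = tens (h *m aH) (hmul mu a b) *m Phi,
      (* E2 *)
      forall (h : 'rV[K]_m) (a : 'rV[K]_n),
        tmap (mxf Phi) (@id 'rV[K]_m)
          (assocL (tmap (@id 'rV[K]_m) (mxf Phi) (assocR (tens (h *m DH) (a *m aA)))))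
        = assocL (tmap (mxf aA) (mxf DH) (tens h a *m Phi)),
      (* E3 *)
      forall (h : 'rV[K]_m) (a : 'rV[K]_n),
        rcontract (cvfun eH) (tens h a *m Phi) = cvfun eH h *: a &
      (* E4 *)
      forall h : 'rV[K]_m, tens h one *m Phi = tens one h].
Proof.
move=> _ uA uH _ _ C.
have Ephi := phi_pt C.
rewrite /is_hom_cotwistor.
split=> [[m0 m1 m2 m3 m4] | [e0 e1 e2 e3 e4]].
- have E0m : Phi *m Km aA aH = Km aH aA *m Phi.
    by apply/(E0M0 _ _ uA); move/M0_iff: m0; rewrite Ephi.
  split.
  + exact/E0_iff.
  + apply/E1_iff; apply/(E1M1 mu uA uH E0m); by move/M1_iff: m1; rewrite Ephi.
  + apply/E2_iff; apply/(E2M2 _ _ uA); by move/M2_iff: m2; rewrite Ephi.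
  + apply/E3_iff; apply/E3M3; by move/M3_iff: m3; rewrite Ephi.
  + apply/E4_iff; apply/E4M4; by move/M4_iff: m4; rewrite Ephi.
- have E0m : Phi *m Km aA aH = Km aH aA *m Phi by exact/E0_iff.
  split.
  + apply/M0_iff; rewrite Ephi; exact/(E0M0 _ _ uA).
  + apply/M1_iff; rewrite Ephi; apply/(E1M1 mu uA uH E0m); exact/E1_iff.
  + apply/M2_iff; rewrite Ephi; apply/(E2M2 _ _ uA); exact/E2_iff.
  + apply/M3_iff; rewrite Ephi; apply/E3M3; exact/E3_iff.
  + apply/M4_iff; rewrite Ephi; apply/E4M4; exact/E4_iff.
Qed.
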